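(* Let $Q$ be an admissible orientation of $\tilde A_n$ and let $I$ be a non-zero linearized semigroup ideal of $\Bbbk Q$. Then $I$ is indecomposable (as an ideal, i.e. it is not a direct sum of two non-zero ideals) if and only if the graph $\Gamma_I$ is connected.
   Context: $\Bbbk$ is an algebraically closed field. An admissible orientation of $\tilde A_n$ is a finite quiver $Q$ with $n$ vertices whose underlying undirected graph is a cycle, having no oriented cycle and at least one source; let $k\ge1$ be the number of sources (= number of sinks). Paths include trivial paths $\varepsilon_x$; products of paths in $\Bbbk Q$ are concatenations when defined and $0$ otherwise. $\omega\le_J\upsilon$ means $\upsilon=\alpha\omega\beta$ for paths $\alpha,\beta$; maximal paths are the $\le_J$-maximal paths (they are the $2k$ paths from a source to an adjacent sink). A linearized semigroup ideal is an ideal spanned by a set $X$ of paths such that $\alpha\omega\beta\in X$ whenever $\omega\in X$ and $\alpha\omega\beta$ is a defined path. The graph $\Gamma$ has the maximal paths as vertices and the sources and sinks of $Q$ as edges, the edge $x$ joining the two maximal paths having $x$ as an endpoint. For a linearized semigroup ideal $I$, $\Gamma_I$ is the subgraph with vertex set the maximal paths lying in $I$ and edge set the sources/sinks $x$ with $\varepsilon_x\in I$. *)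

(* Defs.v *)
From mathcomp Require Import all_boot all_algebra.
Set Implicit Arguments. Unset Strict Implicit. Unset Printing Implicit Defensive.
Import GRing.Theory.
Local Open Scope ring_scope.

(* The quiver Q(n, o): vertices 'I_n, arranged cyclically; for each i : 'I_n
   there is one arrow (also named i) joining vertex i and vertex i+1 (mod n);
   it points i -> i+1 if o i = true, and i+1 -> i otherwise.  Every finite
   quiver with n vertices whose underlying graph is a cycle is of this form. *)
Section PathAlgebra.
Variables (n : nat) (o : 'I_n -> bool).

Definition arr_src (a : 'I_n) : 'I_n := if o a then a else ordS a.
Definition arr_tgt (a : 'I_n) : 'I_n := if o a then ordS a else a.

Definition pcode : Type := ('I_n * seq 'I_n)%type.

Fixpoint is_walk (x : 'I_n) (s : seq 'I_n) : bool :=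
  if s is a :: s' then (arr_src a == x) && is_walk (arr_tgt a) s' else true.

Fixpoint walk_end (x : 'I_n) (s : seq 'I_n) : 'I_n :=
  if s is a :: s' then walk_end (arr_tgt a) s' else x.

Definition is_path (p : pcode) : bool := is_walk p.1 p.2.
Definition psrc (p : pcode) : 'I_n := p.1.
Definition ptgt (p : pcode) : 'I_n := walk_end p.1 p.2.
Definition triv (x : 'I_n) : pcode := (x, [::]).

Definition pcat (p q : pcode) : option pcode :=
  if ptgt p == psrc q then Some (p.1, p.2 ++ q.2) else None.

Definition has_oriented_cycle : Prop :=
  exists p : pcode, [/\ is_path p, p.2 != [::] & ptgt p = psrc p].

Definition is_source (x : 'I_n) : bool := [forall a : 'I_n, arr_tgt a != x].
Definition is_sink (x : 'I_n) : bool := [forall a : 'I_n, arr_src a != x].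

Definition admissible : Prop :=
  ~ has_oriented_cycle /\ exists x, is_source x.

Definition leJ (w u : pcode) : Prop :=
  exists a b : pcode, exists m : pcode,
    [/\ is_path a, is_path b, pcat a w = Some m & pcat m b = Some u].

Definition maximal_path (u : pcode) : Prop :=
  is_path u /\ forall z, is_path z -> leJ u z -> leJ z u.

Variable F : fieldType.

(* The path algebra kQ: F-valued functions on path codes supported on valid
   paths (the coefficient of each path); since Q is acyclic there are finitely
   many paths, so this is the F-span of the paths. *)
Definition in_kQ (f : pcode -> F) : Prop := forall p, f p != 0 -> is_path p.

Definition zerof : pcode -> F := fun _ => 0.
Definition addf (f g : pcode -> F) : pcode -> F := fun p => f p + g p.
Definition scalef (c : F) (f : pcode -> F) : pcode -> F := fun p => c * f p.

Definition mulf (f g : pcode -> F) : pcode -> F :=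
  fun p => \sum_(i < (size p.2).+1)
             f (p.1, take i p.2) * g (walk_end p.1 (take i p.2), drop i p.2).

Definition basis_el (p : pcode) : pcode -> F := fun q => (p == q)%:R.

Definition is_ideal (I : (pcode -> F) -> Prop) : Prop :=
  [/\ forall f, I f -> in_kQ f,
      I zerof,
      forall f g, I f -> I g -> I (addf f g),
      forall c f, I f -> I (scalef c f)
    & forall f g, I f -> in_kQ g -> I (mulf g f) /\ I (mulf f g)].

Definition nonzero_set (I : (pcode -> F) -> Prop) : Prop :=
  exists f, I f /\ f <> zerof.

Definition in_span (X : pcode -> Prop) (f : pcode -> F) : Prop :=
  exists (s : seq pcode) (c : pcode -> F),
    (forall p, p \in s -> X p) /\
    f = fun q => \sum_(p <- s) c p * (p == q)%:R.

Definition lin_sg_ideal (I : (pcode -> F) -> Prop) : Prop :=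
  exists X : pcode -> Prop,
    [/\ forall p, X p -> is_path p,
        forall w a b m u, X w -> is_path a -> is_path b ->
          pcat a w = Some m -> pcat m b = Some u -> X u
      & forall f, I f <-> in_span X f].

Definition ideal_decomposable (I : (pcode -> F) -> Prop) : Prop :=
  exists J K : (pcode -> F) -> Prop,
    [/\ is_ideal J /\ is_ideal K, nonzero_set J, nonzero_set K,
        (forall f, I f <-> exists j k, J j /\ K k /\ f = addf j k)
      & forall f, J f -> K f -> f = zerof].

Definition ideal_indecomposable I : Prop := ~ ideal_decomposable I.

Definition is_endpoint (x : 'I_n) (p : pcode) : Prop := psrc p = x \/ ptgt p = x.

Definition gamma_vertex (I : (pcode -> F) -> Prop) (u : pcode) : Prop :=
  maximal_path u /\ I (basis_el u).

Definition gamma_adj (I : (pcode -> F) -> Prop) (u v : pcode) : Prop :=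
  [/\ gamma_vertex I u, gamma_vertex I v, u <> v &
      exists x, [/\ is_source x || is_sink x, I (basis_el (triv x)),
                    is_endpoint x u & is_endpoint x v]].

Inductive gamma_conn (I : (pcode -> F) -> Prop) : pcode -> pcode -> Prop :=
  | gc_refl u : gamma_conn I u u
  | gc_step u v w : gamma_adj I u v -> gamma_conn I v w -> gamma_conn I u w.

Definition gamma_connected (I : (pcode -> F) -> Prop) : Prop :=
  forall u v, gamma_vertex I u -> gamma_vertex I v -> gamma_conn I u v.

End PathAlgebra.

(* Main.v *)
From mathcomp Require Import all_boot all_algebra.
Require Import Defs.
From mathcomp Require Import zify.
From Stdlib Require Import Classical ClassicalEpsilon FunctionalExtensionality.
Set Implicit Arguments. Unset Strict Implicit. Unset Printing Implicit Defensive.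

Section Comb.
Variables (n : nat) (o : 'I_n -> bool).
Hypothesis acyc : ~ has_oriented_cycle o.

Lemma walk_cat x s1 s2 :
  is_walk o x (s1 ++ s2) = is_walk o x s1 && is_walk o (walk_end o x s1) s2.
Proof. by elim: s1 x => [|a s1 IH] x //=; rewrite IH andbA. Qed.

Lemma wend_cat x s1 s2 : walk_end o x (s1 ++ s2) = walk_end o (walk_end o x s1) s2.
Proof. by elim: s1 x => [|a s1 IH] x //=. Qed.

Lemma walk_rcons x s e :
  is_walk o x (rcons s e) = is_walk o x s && (arr_src o e == walk_end o x s).
Proof. by rewrite -cats1 walk_cat /= andbT. Qed.

Lemma wend_rcons x s e : walk_end o x (rcons s e) = arr_tgt o e.
Proof. by rewrite -cats1 wend_cat. Qed.

Lemma walk_bound x s : is_walk o x s -> size s < n.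
Proof.
move=> ws; rewrite ltnNge; apply/negP => Hn.
set vs := [seq walk_end o x (take i s) | i <- iota 0 (size s).+1].
have : ~~ uniq vs.
  apply/negP => U.
  have := uniq_leq_size U (fun y _ => mem_enum 'I_n y).
  by rewrite size_map size_iota size_enum_ord ltnNge Hn.
case/(uniqPn x) => i [j [lij ljs E]].
move: ljs; rewrite size_map size_iota ltnS => ljs.
have hj : j < (size s).+1 by rewrite ltnS.
have hi : i < (size s).+1 by apply: ltn_trans lij hj.
rewrite (nth_map 0) ?size_iota // (nth_map 0) ?size_iota // !nth_iota // !add0n in E.
apply: acyc.
exists (walk_end o x (take i s), drop i (take j s)); split.
- rewrite /is_path /=.
  have : is_walk o x (take j s) by move: ws; rewrite -{1}(cat_take_drop j s) walk_cat => /andP[].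
  rewrite -{1}(cat_take_drop i (take j s)) walk_cat take_takel ?(ltnW lij) //.
  by case/andP.
- rewrite -size_eq0 size_drop size_takel //. by rewrite subn_eq0 -ltnNge.
- rewrite /ptgt /psrc /= -wend_cat.
  rewrite -{1}(take_takel s (ltnW lij)) cat_take_drop.
  by rewrite E.
Qed.


Lemma pcatP a b m : pcat o a b = Some m <-> ptgt o a = psrc b /\ m = (a.1, a.2 ++ b.2).
Proof.
rewrite /pcat; case: eqP => [->|ne]; split => //.
- by case=> <-.
- by case=> _ ->.
- by case.
Qed.

Lemma ptgt_cat a b : ptgt o a = psrc b -> ptgt o (a.1, a.2 ++ b.2) = ptgt o b.
Proof. by rewrite /ptgt /psrc /= wend_cat => ->. Qed.

Lemma path_cat a b : is_path o a -> is_path o b -> ptgt o a = psrc b ->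
  is_path o (a.1, a.2 ++ b.2).
Proof. rewrite /is_path /= walk_cat => -> pb e /=; move: pb; by have -> : b.1 = ptgt o a by rewrite e. Qed.

Lemma leJP w u : leJ o w u <-> exists a b, [/\ is_path o a, is_path o b, ptgt o a = psrc w,
   ptgt o w = psrc b & u = (a.1, a.2 ++ w.2 ++ b.2)].
Proof.
split.
- case=> a [b [m [pa pb /pcatP [e1 em] /pcatP [e2 eu]]]].
  exists a, b; split => //.
  + by rewrite -e2 em ptgt_cat.
  + by rewrite eu em /= catA.
- case=> a [b [pa pb e1 e2 eu]].
  exists a, b, (a.1, a.2 ++ w.2); split => //.
  + by apply/pcatP.
  + by apply/pcatP; rewrite ptgt_cat // eu /= catA.
Qed.

Lemma leJ_refl w : leJ o w w.
Proof.
apply/leJP; exists (triv w.1), (triv (ptgt o w)); split => //.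
by case: w => x s /=; rewrite cats0.
Qed.

Lemma leJ_trans w1 w2 w3 : leJ o w1 w2 -> leJ o w2 w3 -> leJ o w1 w3.
Proof.
case/leJP=> a1 [b1 [pa1 pb1 ea1 eb1 e2]] /leJP [a2 [b2 [pa2 pb2 ea2 eb2 e3]]].
apply/leJP; exists (a2.1, a2.2 ++ a1.2), (b1.1, b1.2 ++ b2.2); split.
- apply: path_cat => //. by rewrite ea2 e2.
- apply: path_cat => //. rewrite -eb2 e2 /ptgt /= !wend_cat.
  by rewrite -/(ptgt o a1) ea1 -/(ptgt o w1) eb1.
- by rewrite ptgt_cat // ea2 e2.
- by [].
- by rewrite e3 e2 /= !catA.
Qed.

Lemma leJ_size w u : leJ o w u -> size w.2 <= size u.2.
Proof. by case/leJP=> a [b [_ _ _ _ ->]] /=; rewrite !size_cat; lia. Qed.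

Lemma leJ_eq w u : leJ o w u -> size u.2 <= size w.2 -> u = w.
Proof.
case/leJP=> a [b [_ _ ea _ eu]]; rewrite eu /= !size_cat => le.
have /eqP/size0nil h1 : size a.2 == 0 by lia.
have /eqP/size0nil h2 : size b.2 == 0 by lia.
move: ea; rewrite /ptgt h1 h2 /= cats0 => ->. by clear eu le; case: w.
Qed.



Lemma max_src u : maximal_path o u -> is_source o (psrc u).
Proof.
case=> pu mx; apply/forallP => c; apply/negP => /eqP e.
have pz : is_path o (arr_src o c, c :: u.2) by rewrite /is_path /= eqxx e.
have l : leJ o u (arr_src o c, c :: u.2).
  apply/leJP; exists (arr_src o c, [:: c]), (triv (ptgt o u)); split => //.
  - by rewrite /is_path /= eqxx.
  - by rewrite /= cats0.
by have := leJ_size (mx _ pz l); rewrite /= ltnn.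
Qed.

Lemma max_snk u : maximal_path o u -> is_sink o (ptgt o u).
Proof.
case=> pu mx; apply/forallP => c; apply/negP => /eqP e.
have pz : is_path o (u.1, rcons u.2 c) by rewrite /is_path /= walk_rcons -/(is_path o u) pu e /=.
have l : leJ o u (u.1, rcons u.2 c).
  apply/leJP; exists (triv u.1), (ptgt o u, [:: c]); split => //.
  - by rewrite /is_path /= e eqxx.
  - by rewrite /= cats1.
by have := leJ_size (mx _ pz l); rewrite /= size_rcons ltnn.
Qed.

Lemma same_ends_max u p : maximal_path o u -> is_path o p -> psrc p = psrc u ->
  ptgt o p = ptgt o u -> maximal_path o p.
Proof.
move=> [pu mx] pp es et; split => // z pz lz.
have lz' := lz; case/leJP: lz' => a [b [pa pb ea eb ez]].
have l : leJ o u (a.1, a.2 ++ u.2 ++ b.2).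
  by apply/leJP; exists a, b; split => //; rewrite -?es -?et.
have pz' : is_path o (a.1, a.2 ++ u.2 ++ b.2).
  have := @path_cat a (u.1, u.2 ++ b.2) pa; apply; last by rewrite ea es.
  by apply: path_cat => //; rewrite -et eb.
have := leJ_size (mx _ pz' l); rewrite /= !size_cat => h.
rewrite (leJ_eq lz); first exact: leJ_refl.
by rewrite ez /= !size_cat; lia.
Qed.

Lemma exists_max p : is_path o p -> exists z, maximal_path o z /\ leJ o p z.
Proof.
move=> pp; have : n - size p.2 <= n - size p.2 by [].
move: {2}(n - size p.2) => k; elim: k p pp => [|k IH] p pp hk.
- case: (classic (maximal_path o p)) => [m|nm]; first by exists p; split => //; apply: leJ_refl.
  exfalso; apply: nm; split => // z pz lz.
  have := walk_bound pz; have := walk_bound pp; have := leJ_size lz.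
  move=> h1 h2 h3; exfalso; lia.
- case: (classic (maximal_path o p)) => [m|nm]; first by exists p; split => //; apply: leJ_refl.
  have : exists z, [/\ is_path o z, leJ o p z & ~ leJ o z p].
    apply: NNPP => ne; apply: nm; split => // z pz lz.
    by apply: NNPP => nl; apply: ne; exists z.
  case=> z [pz lz nl].
  have hs : size p.2 < size z.2.
    rewrite ltn_neqAle leJ_size // andbT; apply/negP => /eqP e.
    by apply: nl; rewrite (leJ_eq lz) ?e //; apply: leJ_refl.
  have := walk_bound pz => hz.
  case: (IH z pz) => [|w [mw lw]]; first by lia.
  by exists w; split => //; apply: leJ_trans lw.
Qed.

Lemma no_loop c : arr_src o c != arr_tgt o c.
Proof.
apply/eqP => e; apply: acyc; exists (arr_src o c, [:: c]); split => //;
  by rewrite /is_path /ptgt /psrc /= ?eqxx ?e.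
Qed.

Lemma touch_src d y : arr_src o d = y -> d = y \/ ordS d = y.
Proof. by rewrite /arr_src; case: (o d) => <-; [left|right]. Qed.

Lemma touch_tgt d y : arr_tgt o d = y -> d = y \/ ordS d = y.
Proof. by rewrite /arr_tgt; case: (o d) => <-; [right|left]. Qed.

Lemma uniq3 (c d1 d2 y : 'I_n) : c = y \/ ordS c = y -> d1 = y \/ ordS d1 = y ->
  d2 = y \/ ordS d2 = y -> c <> d1 -> c <> d2 -> d1 = d2.
Proof.
move=> h1 h2 h3 n1 n2.
have i1 : forall a b : 'I_n, ordS a = y -> ordS b = y -> a = b.
  by move=> a b ea eb; apply: ordS_inj; rewrite ea eb.
case: h1 => e1.
- case: h2 => e2; first by exfalso; apply: n1; rewrite e1 e2.
  case: h3 => e3; first by exfalso; apply: n2; rewrite e1 e3.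
  exact: i1.
- case: h2 => e2; last by exfalso; apply: n1; apply: i1.
  case: h3 => e3; first by rewrite e2 e3.
  by exfalso; apply: n2; apply: i1.
Qed.

Lemma uniq_next c d1 d2 : arr_tgt o c = arr_src o d1 -> arr_tgt o c = arr_src o d2 -> d1 = d2.
Proof.
move=> e1 e2; apply: (@uniq3 c d1 d2 (arr_tgt o c)).
- exact: touch_tgt.
- by apply: touch_src; rewrite e1.
- by apply: touch_src; rewrite e2.
- by move=> ec; subst; move: (no_loop d1); rewrite e1 eqxx.
- by move=> ec; subst; move: (no_loop d2); rewrite e2 eqxx.
Qed.

Lemma uniq_prev c d1 d2 : arr_tgt o d1 = arr_src o c -> arr_tgt o d2 = arr_src o c -> d1 = d2.
Proof.
move=> e1 e2; apply: (@uniq3 c d1 d2 (arr_src o c)).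
- exact: touch_src.
- by apply: touch_tgt; rewrite e1.
- by apply: touch_tgt; rewrite e2.
- by move=> ec; subst; move: (no_loop d1); rewrite e1 eqxx.
- by move=> ec; subst; move: (no_loop d2); rewrite e2 eqxx.
Qed.


Lemma right_uniq r1 r2 c : is_walk o (arr_tgt o c) r1 -> is_walk o (arr_tgt o c) r2 ->
  is_sink o (walk_end o (arr_tgt o c) r1) -> is_sink o (walk_end o (arr_tgt o c) r2) -> r1 = r2.
Proof.
elim: r1 r2 c => [|d1 r1 IH] [|d2 r2] c //=.
- by move=> _ /andP [/eqP e _] /forallP /(_ d2); rewrite e eqxx.
- by move=> /andP [/eqP e _] _ _ /forallP /(_ d1); rewrite e eqxx.
- move=> /andP [/eqP e1 w1] /andP [/eqP e2 w2] s1 s2.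
  have ed : d1 = d2 by apply: (@uniq_next c); rewrite ?e1 ?e2.
  subst d2; congr (_ :: _); exact: IH w1 w2 s1 s2.
Qed.

Lemma left_uniq l1 l2 c x1 x2 : is_walk o x1 l1 -> is_walk o x2 l2 ->
  walk_end o x1 l1 = arr_src o c -> walk_end o x2 l2 = arr_src o c ->
  is_source o x1 -> is_source o x2 -> l1 = l2 /\ x1 = x2.
Proof.
elim/last_ind: l1 l2 c => [|l1 e1 IH] l2 c; case/lastP: l2 => [|l2 e2] //=.
- by move=> _ _ -> ->.
- move=> _ _ h1; rewrite wend_rcons => h2 /forallP /(_ e2); by rewrite h2 -h1 eqxx.
- rewrite wend_rcons => _ _ h1 h2 _ /forallP /(_ e1); by rewrite h1 -h2 eqxx.
- rewrite !walk_rcons !wend_rcons => /andP [w1 /eqP f1] /andP [w2 /eqP f2] g1 g2 s1 s2.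
  have ee : e1 = e2 by apply: (@uniq_prev c); rewrite ?g1 ?g2.
  subst e2; have [-> ->] := IH l2 e1 w1 w2 (esym f1) (esym f2) s1 s2; done.
Qed.

Lemma same_arrow w w' l1 r1 l2 r2 c : maximal_path o w -> maximal_path o w' ->
  w.2 = l1 ++ c :: r1 -> w'.2 = l2 ++ c :: r2 -> w = w'.
Proof.
move=> mw mw' e1 e2.
have sw := max_src mw; have sw' := max_src mw'.
have tw := max_snk mw; have tw' := max_snk mw'.
case: mw mw' => pw _ [pw' _].
move: pw pw' tw tw' sw sw'; rewrite /is_path /ptgt /psrc e1 e2 !walk_cat !wend_cat /=.
move=> /and3P [wl1 /eqP a1 wr1] /and3P [wl2 /eqP a2 wr2] t1 t2 s1 s2.
have [el ex] := left_uniq wl1 wl2 (esym a1) (esym a2) s1 s2.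
have er := right_uniq wr1 wr2 t1 t2.
clear -el er ex e1 e2; move: e1 e2 ex; case: w => x s; case: w' => x' s' /= -> -> ->; by rewrite el er.
Qed.


Lemma vertex_pos (w a b : pcode n) : is_path o w -> w = (a.1, a.2 ++ b.2) ->
  is_endpoint o (walk_end o a.1 a.2) w \/ exists l e d r, [/\ w.2 = rcons l e ++ d :: r,
     arr_tgt o e = walk_end o a.1 a.2 & arr_src o d = walk_end o a.1 a.2].
Proof.
case: a => a1 a2; case: b => b1 b2 /= pw ew.
case/lastP: a2 ew => [|l e] ew.
- by left; left; rewrite ew.
- case: b2 ew => [|d r] ew.
  + by left; right; rewrite ew /ptgt /= cats0.
  + right; exists l, e, d, r; split.
    * by rewrite ew.
    * by rewrite wend_rcons.
    * move: pw; rewrite ew /is_path /= walk_cat /= => /and3P [_ /eqP -> _].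
      by rewrite wend_rcons.
Qed.

Lemma endpoint_ss w x : maximal_path o w -> is_endpoint o x w -> is_source o x || is_sink o x.
Proof. by move=> mw [] <-; rewrite ?max_src ?max_snk ?orbT. Qed.

Lemma interior_not_end w x e d : maximal_path o w -> arr_tgt o e = x -> arr_src o d = x ->
  is_endpoint o x w -> False.
Proof.
move=> mw te sd [] ex.
- by have := max_src mw; rewrite ex => /forallP /(_ e); rewrite te eqxx.
- by have := max_snk mw; rewrite ex => /forallP /(_ d); rewrite sd eqxx.
Qed.

Lemma shared w w' p : maximal_path o w -> maximal_path o w' -> leJ o p w -> leJ o p w' ->
  w <> w' -> exists x, [/\ p = triv x, is_source o x || is_sink o x,
     is_endpoint o x w & is_endpoint o x w'].
Proof.
move=> mw mw' /leJP [a [b [pa pb ea eb ew]]] /leJP [a' [b' [pa' pb' ea' eb' ew']]] ne.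
case: p ea eb ew ew' ea' eb' => x [|c r] /= ea eb ew ew' ea' eb'; last first.
  by exfalso; apply: ne; apply: (same_arrow (l1 := a.2) (r1 := r ++ b.2) (l2 := a'.2) (r2 := r ++ b'.2) mw mw'); rewrite ?ew ?ew'.
have pw : is_path o w by case: mw.
have pw' : is_path o w' by case: mw'.
have ew1 : w = (a.1, a.2 ++ b.2) by rewrite ew.
have ew1' : w' = (a'.1, a'.2 ++ b'.2) by rewrite ew'.
have hx : walk_end o a.1 a.2 = x by [].
have hx' : walk_end o a'.1 a'.2 = x by [].
have P := vertex_pos pw ew1; have P' := vertex_pos pw' ew1'.
rewrite hx in P; rewrite hx' in P'.
exists x.
case: P => [E|[l [e [d [r [E1 E2 E3]]]]]]; case: P' => [E'|[l' [e' [d' [r' [E1' E2' E3']]]]]].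
- by split => //; apply: endpoint_ss E.
- by exfalso; apply: (interior_not_end mw E2' E3' E).
- by exfalso; apply: (interior_not_end mw' E2 E3 E').
- exfalso; apply: ne.
  have ed : d = d' by apply: (uniq_next (c := e)); rewrite E2 ?E3 ?E3'.
  subst d'; exact: (same_arrow mw mw' E1 E1').
Qed.

End Comb.

Import GRing.Theory.
Local Open Scope ring_scope.

Section Alg.
Variables (n : nat) (o : 'I_n -> bool) (F : fieldType).
Hypothesis acyc : ~ has_oriented_cycle o.

Lemma mul_e_l x (f : pcode n -> F) : mulf o (basis_el F (triv x)) f = fun p => (x == p.1)%:R * f p.
Proof.
apply: functional_extensionality => p; rewrite /mulf big_ord_recl /= take0 drop0.
rewrite big1 ?addr0; first by rewrite /basis_el /triv xpair_eqE eqxx andbT; case: p.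
move=> i _; rewrite /basis_el /triv xpair_eqE.
have -> : ([::] == take (bump 0 i) p.2) = false.
  apply/negP => /eqP/(congr1 size); rewrite size_takel /=; first by [].
  by have := ltn_ord i.
by rewrite andbF mul0r.
Qed.

Lemma mul_e_r y (f : pcode n -> F) : mulf o f (basis_el F (triv y)) = fun p => f p * (y == ptgt o p)%:R.
Proof.
apply: functional_extensionality => p; rewrite /mulf big_ord_recr /= take_size drop_size.
rewrite big1 ?add0r; first by rewrite /basis_el /triv xpair_eqE eqxx andbT; case: p.
move=> i _; rewrite /basis_el /triv xpair_eqE.
have -> : ([::] == drop (widen_ord (leqnSn _) i) p.2) = false.
  apply/negP => /eqP/(congr1 size); rewrite size_drop /=.
  by have := ltn_ord i; lia.
by rewrite andbF mulr0.
Qed.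


Lemma mul_b_l (a q : pcode n) (f : pcode n -> F) : q.1 = ptgt o a ->
  mulf o (basis_el F a) f (a.1, a.2 ++ q.2) = f q.
Proof.
move=> eq; rewrite /mulf /=.
have hi : (size a.2 < (size (a.2 ++ q.2)).+1)%N by rewrite size_cat; lia.
rewrite (bigD1 (Ordinal hi)) //= big1 ?addr0.
  rewrite take_size_cat // drop_size_cat // /basis_el -surjective_pairing eqxx mul1r.
  by rewrite -/(ptgt o a) -eq; case: q {eq hi}.
move=> i ne; rewrite /basis_el.
have -> : (a == (a.1, take i (a.2 ++ q.2))) = false.
  apply/negP => /eqP/(congr1 (fun p => size p.2)) /=; rewrite size_takel.
  - by move=> e; move: ne; rewrite -val_eqE /= e eqxx.
  - by have := ltn_ord i; rewrite ltnS.
by rewrite mul0r.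
Qed.

Lemma mul_b_r (b q : pcode n) (f : pcode n -> F) : ptgt o q = b.1 ->
  mulf o f (basis_el F b) (q.1, q.2 ++ b.2) = f q.
Proof.
move=> eq; rewrite /mulf /=.
have hi : (size q.2 < (size (q.2 ++ b.2)).+1)%N by rewrite size_cat; lia.
rewrite (bigD1 (Ordinal hi)) //= big1 ?addr0.
  rewrite take_size_cat // drop_size_cat // -/(ptgt o q) eq.
  by rewrite /basis_el; case: b {eq hi} => ? ? /=; rewrite eqxx mulr1; case: q.
move=> i ne; rewrite /basis_el.
have -> : (b == (walk_end o q.1 (take i (q.2 ++ b.2)), drop i (q.2 ++ b.2))) = false.
  apply/negP => /eqP/(congr1 (fun p => size p.2)) /=; rewrite size_drop => e.
  move: ne; rewrite -val_eqE /=; have := ltn_ord i; have hs := size_cat q.2 b.2 => h.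
  have -> : nat_of_ord i = size q.2 by lia.
  by rewrite eqxx.
by rewrite mulr0.
Qed.

Lemma mulf_nz (g f : pcode n -> F) p : mulf o g f p != 0 ->
  exists i : 'I_(size p.2).+1, g (p.1, take i p.2) != 0 /\
     f (walk_end o p.1 (take i p.2), drop i p.2) != 0.
Proof.
move=> nz; apply: NNPP => ne; move/negP: nz; apply; apply/eqP.
rewrite /mulf big1 // => i _.
case: (g (p.1, take i p.2) =P 0) => [->|/eqP g0]; first by rewrite mul0r.
case: (f (walk_end o p.1 (take i p.2), drop i p.2) =P 0) => [->|/eqP f0]; first by rewrite mulr0.
by exfalso; apply: ne; exists i.
Qed.


Fixpoint seqs (m : nat) : seq (seq 'I_n) :=
  if m is m'.+1 then [::] :: [seq a :: s | a <- enum 'I_n, s <- seqs m'] else [:: [::]].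

Lemma mem_seqs m s : (size s <= m)%N -> s \in seqs m.
Proof.
elim: m s => [|m IH] [|a s] //= h.
rewrite inE /=; apply: (allpairs_f (fun a s => a :: s)); first by rewrite mem_enum.
exact: IH.
Qed.

Definition all_codes : seq (pcode n) := [seq (x, s) | x <- enum 'I_n, s <- seqs n].

Lemma mem_codes p : is_path o p -> p \in all_codes.
Proof.
move=> pp; rewrite [p]surjective_pairing; apply: (allpairs_f (fun x s => (x, s))).
- by rewrite mem_enum.
- by apply: mem_seqs; apply: ltnW; apply: (walk_bound acyc pp).
Qed.

Definition supp_in (P : pcode n -> Prop) (f : pcode n -> F) := forall p, f p != 0 -> P p.

Definition supp_seq (f : pcode n -> F) := [seq p <- undup all_codes | f p != 0].

Lemma sum_basis (s : seq (pcode n)) (c : pcode n -> F) q : uniq s ->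
  \sum_(p <- s) c p * (p == q)%:R = if q \in s then c q else 0.
Proof.
elim: s => [|a s IH] /=; first by rewrite big_nil.
case/andP => na us; rewrite big_cons IH // inE.
case: (eqVneq a q) => [<-|ne] /=.
- by rewrite (negbTE na) mulr1 addr0.
- by rewrite mulr0 add0r.
Qed.

Lemma sum_nz (s : seq (pcode n)) (c : pcode n -> F) q :
  \sum_(p <- s) c p * (p == q)%:R != 0 -> q \in s.
Proof.
apply: contraR => nq; rewrite big_seq big1 // => p ps.
have -> : (p == q) = false by apply/negP => /eqP e; move: ps; rewrite e (negbTE nq).
by rewrite mulr0.
Qed.

Lemma repr (f : pcode n -> F) : in_kQ o f ->
  f = fun q => \sum_(p <- supp_seq f) f p * (p == q)%:R.
Proof.
move=> kf; apply: functional_extensionality => q.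
rewrite sum_basis ?filter_uniq ?undup_uniq // mem_filter mem_undup.
case: (eqVneq (f q) 0) => [-> |nz] //=.
by rewrite mem_codes //; apply: kf.
Qed.

Lemma mem_supp_seq (f : pcode n -> F) p : p \in supp_seq f -> f p != 0.
Proof. by rewrite mem_filter => /andP []. Qed.

Lemma span_supp (X : pcode n -> Prop) f : (forall p, X p -> is_path o p) ->
  in_span X f <-> supp_in X f.
Proof.
move=> Xp; split.
- case=> s [c [sX ->]] q /sum_nz; exact: sX.
- move=> sf; exists (supp_seq f), f; split.
  + by move=> p /mem_supp_seq; apply: sf.
  + by apply: repr => p /sf /Xp.
Qed.

End Alg.

Section Main.
Variables (n : nat) (o : 'I_n -> bool) (F : fieldType).
Hypothesis acyc : ~ has_oriented_cycle o.
Variables (I : (pcode n -> F) -> Prop) (X : pcode n -> Prop).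
Hypothesis Xp : forall p, X p -> is_path o p.
Hypothesis Xc : forall w a b m u, X w -> is_path o a -> is_path o b ->
          pcat o a w = Some m -> pcat o m b = Some u -> X u.
Hypothesis HI : forall f, I f <-> in_span X f.

Lemma HI' f : I f <-> supp_in X f.
Proof. by split => [/HI/(span_supp acyc _ Xp) // | h]; apply/HI/(span_supp acyc _ Xp). Qed.

Lemma basis_nz (u p : pcode n) : basis_el F u p != 0 -> u = p.
Proof. by rewrite /basis_el; case: (eqVneq u p) => // _; rewrite /= mulr0n eqxx. Qed.

Lemma basis_uu (u : pcode n) : basis_el F u u = 1.
Proof. by rewrite /basis_el eqxx. Qed.

Lemma I_basis u : I (basis_el F u) <-> X u.
Proof.
split => [/HI' h|h]; last apply/HI'.
- by apply: h; rewrite basis_uu oner_neq0.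
- by move=> p /basis_nz <-.
Qed.

Lemma Xup p z : X p -> leJ o p z -> X z.
Proof. by move=> xp [a [b [m [pa pb e1 e2]]]]; apply: Xc e1 e2. Qed.

Lemma kQ_basis u : is_path o u -> in_kQ o (basis_el F u).
Proof. by move=> pu p /basis_nz <-. Qed.

Lemma ptgt_ext (a w b : pcode n) : ptgt o a = psrc w -> ptgt o w = psrc b ->
  ptgt o (a.1, a.2 ++ w.2 ++ b.2) = ptgt o b.
Proof.
move=> e1 e2.
have -> : (a.1, a.2 ++ w.2 ++ b.2) = (a.1, a.2 ++ (w.1, w.2 ++ b.2).2) by [].
by rewrite ptgt_cat // ptgt_cat.
Qed.

Lemma supp_ideal (P : pcode n -> Prop) : (forall p, P p -> is_path o p) ->
  (forall p z, P p -> leJ o p z -> P z) -> is_ideal o (@supp_in n F P).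
Proof.
move=> Pp Pc; split.
- by move=> f sf p /sf /Pp.
- by move=> p; rewrite /zerof eqxx.
- move=> f g sf sg p; rewrite /addf => nz.
  case: (eqVneq (f p) 0) => [e|]; last exact: sf.
  by apply: sg; move: nz; rewrite e add0r.
- move=> c f sf p; rewrite /scalef => nz; apply: sf.
  by apply: contraNneq nz => ->; rewrite mulr0.
- move=> f g sf kg; split => p /mulf_nz [i [h1 h2]].
  + apply: (Pc _ _ (sf _ h2)); apply/leJP.
    exists (p.1, take i p.2), (triv (ptgt o p)); split => //.
    * exact: kg.
    * by rewrite /ptgt /= -wend_cat cat_take_drop.
    * by rewrite /= cats0 cat_take_drop; case: p {h1 h2 i}.
  + apply: (Pc _ _ (sf _ h1)); apply/leJP.
    exists (triv p.1), (walk_end o p.1 (take i p.2), drop i p.2); split => //.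
    * exact: kg.
    * by rewrite /= cat_take_drop; case: p {h1 h2 i}.
Qed.

Lemma conn_snoc u w w' : gamma_conn o I u w -> gamma_adj o I w w' -> gamma_conn o I u w'.
Proof.
elim=> [x|x y z a c IH] adj.
- by apply: gc_step adj _; apply: gc_refl.
- exact: gc_step a (IH adj).
Qed.

Lemma conn_cases u w : gamma_conn o I u w -> u = w \/ exists v, gamma_adj o I u v.
Proof. by case=> [x|x y z a _]; [left|right; exists y]. Qed.

Section Decomp.
Variables u v : pcode n.
Hypotheses (vu : gamma_vertex o I u) (vv : gamma_vertex o I v) (nc : ~ gamma_conn o I u v).

Definition X1 p := X p /\ exists w, [/\ gamma_vertex o I w, gamma_conn o I u w & leJ o p w].
Definition X2 p := X p /\ ~ X1 p.

Lemma X1up p z : X1 p -> leJ o p z -> X1 z.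
Proof.
case=> xp [w [vw cw lw]] lz; split; first exact: Xup lz.
have xz := Xup xp lz.
case: (exists_max acyc (Xp xz)) => w' [mw' lw'].
have vw' : gamma_vertex o I w' by split => //; apply/I_basis; apply: Xup lw'.
exists w'; split => //.
case: (classic (w = w')) => [<-|ne] //.
case: vw => mw Iw.
have [x [ex ss ew ew']] := shared acyc mw mw' lw (leJ_trans lz lw') ne.
apply: (conn_snoc cw); split => //.
exists x; split => //; apply/I_basis; by rewrite -ex.
Qed.

Lemma X2up p z : X2 p -> leJ o p z -> X2 z.
Proof.
case=> xp n1 lz; split; first exact: Xup lz.
case=> _ [w [vw cw lw]]; apply: n1; split => //; exists w; split => //.
exact: leJ_trans lz lw.
Qed.

Lemma decomp : ideal_decomposable o I.
Proof.
have X1p : forall p, X1 p -> is_path o p by move=> p [/Xp].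
have X2p : forall p, X2 p -> is_path o p by move=> p [/Xp].
exists (@supp_in n F X1), (@supp_in n F X2); split.
- by split; apply: supp_ideal => //; [apply: X1up | apply: X2up].
- exists (basis_el F u); split.
  + move=> p /basis_nz <-; split; first by apply/I_basis; case: vu.
    by exists u; split => //; [apply: gc_refl | apply: leJ_refl].
  + by move/(congr1 (fun f => f u)); rewrite basis_uu /zerof; apply/eqP; rewrite oner_neq0.
- exists (basis_el F v); split.
  + move=> p /basis_nz <-; split; first by apply/I_basis; case: vv.
    case=> _ [w [vw cw lw]]; apply: nc.
    case: vv => [[pv mv] _].
    have lwv := mv _ (Xp (Xup (proj1 (I_basis v) (proj2 vv)) lw)) lw.
    by rewrite -(leJ_eq lw (leJ_size lwv)).
  + by move/(congr1 (fun f => f v)); rewrite basis_uu /zerof; apply/eqP; rewrite oner_neq0.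
- move=> f; split.
  + move/HI' => sf.
    exists (fun p => if excluded_middle_informative (X1 p) then f p else 0).
    exists (fun p => if excluded_middle_informative (X1 p) then 0 else f p).
    split; [|split].
    * move=> p; destruct (excluded_middle_informative (X1 p)) as [h|h] => //.
      by move/negP; rewrite eqxx.
    * move=> p; destruct (excluded_middle_informative (X1 p)) as [h|h] => nz.
      - by move/negP: nz; rewrite eqxx.
      - by split => //; apply: sf.
    * apply: functional_extensionality => p; rewrite /addf.
      by destruct (excluded_middle_informative (X1 p)); rewrite ?addr0 ?add0r.
  + case=> j [k [sj [sk ->]]]; apply/HI' => p; rewrite /addf => nz.
    case: (eqVneq (j p) 0) => [e|/sj [] //].
    by case: (sk p) => //; move: nz; rewrite e add0r.
- move=> f s1 s2; apply: functional_extensionality => p; apply/eqP.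
  apply: NNPP => /negP nz; have [_ h] := s2 _ nz; exact: h (s1 _ nz).
Qed.

End Decomp.


Section Indec.
Variables (J K : (pcode n -> F) -> Prop).
Hypotheses (iJ : is_ideal o J) (iK : is_ideal o K).
Hypothesis dec : forall f, I f <-> exists j k, J j /\ K k /\ f = addf j k.
Hypothesis disj : forall f, J f -> K f -> f = (@zerof n F).

Lemma J_mull f g : J f -> in_kQ o g -> J (mulf o g f).
Proof. by move=> Jf kg; case: iJ => _ _ _ _ h; exact: (proj1 (h _ _ Jf kg)). Qed.
Lemma J_mulr f g : J f -> in_kQ o g -> J (mulf o f g).
Proof. by move=> Jf kg; case: iJ => _ _ _ _ h; exact: (proj2 (h _ _ Jf kg)). Qed.
Lemma K_mull f g : K f -> in_kQ o g -> K (mulf o g f).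
Proof. by move=> Jf kg; case: iK => _ _ _ _ h; exact: (proj1 (h _ _ Jf kg)). Qed.
Lemma K_mulr f g : K f -> in_kQ o g -> K (mulf o f g).
Proof. by move=> Jf kg; case: iK => _ _ _ _ h; exact: (proj2 (h _ _ Jf kg)). Qed.

Lemma JI f : J f -> I f.
Proof.
move=> jf; apply/dec; exists f, (@zerof n F); split => //; split; first by case: iK.
by apply: functional_extensionality => p; rewrite /addf /zerof addr0.
Qed.

Lemma KI f : K f -> I f.
Proof.
move=> kf; apply/dec; exists (@zerof n F), f; split; first by case: iJ. split => //.
by apply: functional_extensionality => p; rewrite /addf /zerof add0r.
Qed.

Lemma corner_lemma (L : (pcode n -> F) -> Prop) (iL : is_ideal o L) (LI : forall f, L f -> I f)
  (u : pcode n) (f : pcode n -> F) :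
  L f -> (forall p, X p -> psrc p = psrc u -> ptgt o p = ptgt o u -> p = u) ->
  L (scalef (f u) (basis_el F u)).
Proof.
move=> Lf hu.
have kQf : in_kQ o f by case: iL => h _ _ _ _; apply: h.
have L1 : L (mulf o (mulf o (basis_el F (triv (psrc u))) f) (basis_el F (triv (ptgt o u)))).
  case: iL => _ _ _ _ h.
  have [h1 _] := h _ _ Lf (@kQ_basis (triv (psrc u)) erefl).
  by have [_ h2] := h _ _ h1 (@kQ_basis (triv (ptgt o u)) erefl).
suff <- : mulf o (mulf o (basis_el F (triv (psrc u))) f) (basis_el F (triv (ptgt o u))) =
  scalef (f u) (basis_el F u) by [].
rewrite mul_e_l mul_e_r; apply: functional_extensionality => p; rewrite /scalef /basis_el.
case: (eqVneq u p) => [<-|ne]; first by rewrite /psrc !eqxx mulr1 mul1r mulr1.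
rewrite mulr0.
case: (eqVneq (f p) 0) => [->|nz]; first by rewrite mulr0 mul0r.
have xp : X p by move/HI': (LI _ Lf); apply.
case: (eqVneq (psrc u) p.1) => [e1|_]; last by rewrite !mul0r.
case: (eqVneq (ptgt o u) (ptgt o p)) => [e2|_]; last by rewrite mulr0.
by exfalso; move/eqP: ne; apply; rewrite (hu p xp) // e2.
Qed.

Lemma fact_A u : X u -> (forall p, X p -> psrc p = psrc u -> ptgt o p = ptgt o u -> p = u) ->
  J (basis_el F u) \/ K (basis_el F u).
Proof.
move=> xu hu.
have := proj2 (I_basis u) xu => /dec [j [k [Jj [Kk e]]]].
have e1 : j u + k u = 1 by move/(congr1 (fun f => f u)): e; rewrite basis_uu /addf.
have Lj := corner_lemma iJ JI Jj hu.
have Lk := corner_lemma iK KI Kk hu.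
case: (eqVneq (j u) 0) => [j0|jn].
- right; move: Lk; have -> : k u = 1 by rewrite -e1 j0 add0r.
  suff -> : scalef 1 (basis_el F u) = basis_el F u by [].
  by apply: functional_extensionality => p; rewrite /scalef mul1r.
- left; case: iJ => _ _ _ hs _; have := hs (j u)^-1 _ Lj.
  suff -> : scalef (j u)^-1 (scalef (j u) (basis_el F u)) = basis_el F u by [].
  by apply: functional_extensionality => p; rewrite /scalef mulrA mulVf // mul1r.
Qed.

Lemma triv_only x p : is_path o p -> psrc p = psrc (triv x) -> ptgt o p = ptgt o (triv x) -> p = triv x.
Proof.
case: p => y [|c r] //= pp e1 e2; first by rewrite /triv e1.
exfalso; apply: acyc; exists (y, c :: r); split => //.
by rewrite e2 /psrc /= -e1.
Qed.

Lemma fact_At x : X (triv x) -> J (basis_el F (triv x)) \/ K (basis_el F (triv x)).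
Proof. by move=> xx; apply: fact_A => // p /Xp; apply: triv_only. Qed.

Lemma fact_B (L : (pcode n -> F) -> Prop) (iL : is_ideal o L) x u :
  L (basis_el F (triv x)) -> is_path o u -> is_endpoint o x u -> L (basis_el F u).
Proof.
move=> Lx pu [] ex; case: iL => _ _ _ _ h; have [h1 h2] := h _ _ Lx (kQ_basis pu).
- suff <- : mulf o (basis_el F (triv x)) (basis_el F u) = basis_el F u by [].
  rewrite mul_e_l; apply: functional_extensionality => p; rewrite /basis_el.
  by case: (eqVneq u p) => [<-|]; rewrite ?mulr0 // -ex eqxx mul1r.
- suff <- : mulf o (basis_el F u) (basis_el F (triv x)) = basis_el F u by [].
  rewrite mul_e_r; apply: functional_extensionality => p; rewrite /basis_el.
  by case: (eqVneq u p) => [<-|]; rewrite ?mul0r // -ex eqxx mulr1.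
Qed.

Lemma basis_ne0 u : basis_el F u <> (@zerof n F).
Proof. by move/(congr1 (fun f => f u)); rewrite basis_uu /zerof; apply/eqP; rewrite oner_neq0. Qed.

Lemma propagate u w : gamma_conn o I u w -> J (basis_el F u) -> J (basis_el F w).
Proof.
elim=> [//|x y z [vx vy _ [t [ss It ex ey]]] _ IH] Jx; apply: IH.
have pxs : is_path o x by case: vx => [[]].
have pys : is_path o y by case: vy => [[]].
case: (fact_At (proj1 (I_basis _) It)) => [Jt|Kt].
- exact: fact_B iJ _ _ Jt pys ey.
- by exfalso; apply: (@basis_ne0 x); apply: disj => //; apply: fact_B iK _ _ Kt pxs ex.
Qed.

Lemma J_sum (s : seq (pcode n)) (c : pcode n -> F) :
  (forall p, p \in s -> J (basis_el F p)) -> J (fun q => \sum_(p <- s) c p * (p == q)%:R).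
Proof.
elim: s => [|a s IH] hs.
- have -> : (fun q : pcode n => \sum_(p <- [::]) c p * (p == q)%:R) = (@zerof n F).
    by apply: functional_extensionality => q; rewrite big_nil.
  by case: iJ.
- have -> : (fun q : pcode n => \sum_(p <- a :: s) c p * (p == q)%:R) =
    addf (scalef (c a) (basis_el F a)) (fun q => \sum_(p <- s) c p * (p == q)%:R).
    by apply: functional_extensionality => q; rewrite big_cons.
  case: iJ => _ _ ha hsc _; apply: ha.
  + by apply: hsc; apply: hs; rewrite inE eqxx.
  + by apply: IH => p ps; apply: hs; rewrite inE ps orbT.
Qed.

Lemma JK_false u0 : gamma_connected o I -> gamma_vertex o I u0 -> J (basis_el F u0) ->
  (exists f, K f /\ f <> (@zerof n F)) -> False.
Proof.
move=> conn vu0 Ju0 [k [Kk kn0]].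
have allJ : forall w, gamma_vertex o I w -> J (basis_el F w).
  by move=> w vw; apply: (propagate (conn _ _ vu0 vw)).
have [w kw] : exists w, k w != 0.
  apply: NNPP => ne; apply: kn0; apply: functional_extensionality => p.
  by apply/eqP; apply: NNPP => /negP h; apply: ne; exists p.
have xw : X w by move/HI': (KI Kk); apply.
case: (exists_max acyc (Xp xw)) => u [mu lwu].
case/leJP: (lwu) => a [b [pa pb ea eb eu]].
set k1 := mulf o k (basis_el F b).
set k' := mulf o (basis_el F a) k1.
have Kk1 : K k1 by apply: K_mulr => //; apply: kQ_basis.
have Kk' : K k' by apply: K_mull => //; apply: kQ_basis.
have ku : k' u = k w.
  rewrite eu; have -> : (a.1, a.2 ++ w.2 ++ b.2) = (a.1, a.2 ++ (w.1, w.2 ++ b.2).2) by [].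
  rewrite /k' mul_b_l; last by rewrite /= ea.
  by rewrite /k1 mul_b_r.
have Jk' : J k'.
  have kQ' : in_kQ o k' by case: iK => h _ _ _ _; apply: h.
  rewrite (repr acyc kQ'); apply: J_sum => p /mem_supp_seq nz.
  apply: allJ.
  case/mulf_nz: nz => i [/basis_nz ea' h2].
  case/mulf_nz: h2 => j [h3 /basis_nz eb'].
  set q := (_, take j _) in h3.
  have xq : X q by move/HI': (KI Kk); apply.
  have ep : p = (a.1, a.2 ++ q.2 ++ b.2).
    by rewrite ea' eb' /= !cat_take_drop -surjective_pairing.
  have lqp : leJ o q p.
    apply/leJP; exists a, b; split => //; first by rewrite ea'.
    by rewrite eb'.
  have xp := Xup xq lqp.
  have es : psrc p = psrc u by rewrite eu ep.
  have et : ptgt o p = ptgt o u.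
    rewrite eu ptgt_ext // [in LHS]ep ptgt_ext //; first by rewrite ea'.
    by rewrite eb'.
  split; first exact: (same_ends_max mu (Xp xp) es et).
  exact/I_basis.
move: kw; rewrite -ku (disj Jk' Kk') /zerof eqxx //.
Qed.

End Indec.

Lemma conn_indec : gamma_connected o I -> nonzero_set I -> ideal_indecomposable o I.
Proof.
move=> conn [f [If fn0]] [J [K [[iJ iK] nJ nK dec disj]]].
have [p fp] : exists p, f p != 0.
  apply: NNPP => ne; apply: fn0; apply: functional_extensionality => p.
  by apply/eqP; apply: NNPP => /negP h; apply: ne; exists p.
have xp : X p by move/HI': If; apply.
case: (exists_max acyc (Xp xp)) => z [mz lpz].
have xz := Xup xp lpz.
have pz : is_path o z by case: mz.
have vz : gamma_vertex o I z by split => //; apply/I_basis.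
have dec' : forall f, I f <-> exists j k, K j /\ J k /\ f = addf j k.
  move=> g; rewrite dec; split; case=> j [k [h1 [h2 ->]]]; exists k, j; do !split => //;
  by apply: functional_extensionality => q; rewrite /addf addrC.
have disj' : forall f, K f -> J f -> f = zerof F by move=> g h1 h2; apply: disj.
have : J (basis_el F z) \/ K (basis_el F z).
  case: (classic (exists x, is_endpoint o x z /\ X (triv x))) => [[x [ex xx]]|nox].
  - case: (fact_At iJ iK dec xx) => h; [left|right]; exact: fact_B h pz ex.
  - apply: (fact_A iJ iK dec xz) => q xq es et; apply: NNPP => ne.
    have mq := same_ends_max mz (Xp xq) es et.
    have vq : gamma_vertex o I q by split => //; apply/I_basis.
    case: (conn_cases (conn _ _ vz vq)) => [e|[v [_ _ _ [x [_ Ix ex _]]]]].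
    + by apply: ne.
    + by apply: nox; exists x; split => //; apply/I_basis.
case=> h.
- exact: (JK_false iJ iK dec disj conn vz h nK).
- exact: (JK_false iK iJ dec' disj' conn vz h nJ).
Qed.

End Main.

Theorem theorem9 (F : closedFieldType) (n : nat) (o : 'I_n -> bool)
  (I : (pcode n -> F) -> Prop) :
  admissible o ->
  lin_sg_ideal o I ->
  nonzero_set I ->
  ideal_indecomposable o I <-> gamma_connected o I.
Proof.
move=> [acyc _] [X [Xp Xc HI]] nz; split.
- move=> ind; apply: NNPP => nc; apply: ind.
  have [u /not_all_ex_not [v nv]] := not_all_ex_not _ _ nc.
  have [vu nv'] := imply_to_and _ _ nv.
  have [vv nc'] := imply_to_and _ _ nv'.
  exact: (decomp acyc Xp Xc HI vu vv nc').
- by move=> conn; apply: (conn_indec acyc Xp Xc HI conn nz).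
Qed.
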